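(* Let $d,n\ge 1$, $\lambda>0$, $0<\kappa\le 1$, and let $u\in H^{2}_{\mathrm{mix}}$ on $[0,1]^d$ satisfy the standing facts below. Let $I_n:=\{i\in\mathbb{N}^d:\|i\|_1\le n\}$ and let $u_i$ ($i\in I_n$) be the piecewise $d$-linear interpolant of $u$ on the grid $\Omega_i$. Let $t_n\ge 0$ and for each $i$ with $\|i\|_1=n$ let $t_i\in[0,t_n]$. Let $(U_i)_{i\in I_n}$ be $\{0,1\}$-valued random variables with $U_i=0$ almost surely if $\|i\|_1<n$ and $\Pr(U_i=1)=G(t_i)$ if $\|i\|_1=n$, where $G(t)=\frac{1}{\lambda\Gamma(1+1/\kappa)}\int_0^t e^{-(x/\lambda)^\kappa}dx$. Let $I'=\{i\in I_n: U_i=0\}$ (a random set) and let $u^{\mathrm{gcp}}_{I'}=\sum_{i\in I'}c_iu_i$, where $(c_i)_{i\in I'}$ is the (unique) solution of the general coefficient problem for $I'$. Then $$\mathbb{E}\left[\|u-u^{\mathrm{gcp}}_{I'}\|_{2}\right]\le \epsilon_n\left(1+3\left(1-e^{-(t_n/\lambda)^{\kappa}}\right)\right).$$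
   Context: Notation: for $i\in\mathbb{N}$, $\Omega_i=\{k2^{-i}:k=0,\dots,2^i\}$; for $i\in\mathbb{N}^d$, $\Omega_i=\Omega_{i_1}\times\cdots\times\Omega_{i_d}\subset[0,1]^d$. For multi-indices, $i\le j$ means $i_k\le j_k$ for all $k$, $\|i\|_1=\sum_k i_k$, and $I{\downarrow}:=\{i:\exists j\in I,\ i\le j\}$. $\|\cdot\|_2$ is the $L^2([0,1]^d)$ norm. Hierarchical surpluses: for $j\in\mathbb{N}^d$, $h_j:=\sum_{S\subseteq\{1,\dots,d\}}(-1)^{|S|}u_{j-e_S}$, where $e_S=\sum_{k\in S}e^k$ ($e^k$ the $k$-th unit multi-index) and $u_m:=0$ if some $m_k<0$; so $u_i=\sum_{j\le i}h_j$. Seminorm: $|u|_{H^2_{\mathrm{mix}}}:=\left\|\frac{\partial^{2d}u}{\partial x_1^2\cdots\partial x_d^2}\right\|_2$. Standing facts (taken as given for $u\in H^2_{\mathrm{mix}}$): $u=\sum_{j\in\mathbb{N}^d}h_j$ with convergence in $L^2$, and $\|h_j\|_2\le 3^{-d}4^{-\|j\|_1}|u|_{H^2_{\mathrm{mix}}}$ for all $j$. Define $$\epsilon_n:=\tfrac13\,3^{-d}\,2^{-2n}\,|u|_{H^2_{\mathrm{mix}}}\sum_{k=0}^{d-1}\binom{n+d}{k}\left(\tfrac13\right)^{d-1-k},$$ which equals $3^{-d}|u|_{H^2_{\mathrm{mix}}}\sum_{k=n+1}^{\infty}4^{-k}\binom{k+d-1}{d-1}$. General coefficient problem (GCP) for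 a finite $I\subset\mathbb{N}^d$: for real $(c_i)_{i\in I}$ set $w_i:=\sum_{j\in I,\,j\ge i}c_j$ for $i\in I{\downarrow}$; among all families with $w_i\in\{0,1\}$ for all $i\in I{\downarrow}$, maximise $Q'(w)=\sum_{i\in I{\downarrow}}4^{-\|i\|_1}w_i$. (Here $I'$ is always a downset, for which the GCP solution is unique with $w_i=1$ on $I'$.) $G$ is the random-incidence distribution function of a Weibull renewal process with scale $\lambda$ and shape $\kappa$, modelling the probability that the computation of $u_i$ (taking time $t_i$ on one node) is interrupted by a fault; solutions with $\|i\|_1<n$ are recomputed on failure and hence always available. *)

(* Defs.v *)
From Stdlib Require Import Reals List Arith.
Import ListNotations.
Open Scope R_scope.

(** Multi-indices in N^d are lists of naturals of length d. *)
Definition mi := list nat.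

(** Real-valued functions on R^d (points are coordinate maps nat -> R;
    coordinate k, for k < d). *)
Definition Fun := (nat -> R) -> R.

Definition sumR {A : Type} (l : list A) (f : A -> R) : R :=
  fold_right (fun a acc => f a + acc) 0 l.

Definition norm1 (i : mi) : nat := fold_right Nat.add 0%nat i.

Fixpoint mi_leb (i j : mi) : bool :=
  match i, j with
  | [], [] => true
  | a :: r, b :: s => Nat.leb a b && mi_leb r s
  | _, _ => false
  end.

Fixpoint enum_mi (d n : nat) : list mi :=
  match d with
  | O => [[]]
  | S d' => flat_map (fun a => map (cons a) (enum_mi d' (n - a))) (seq 0 (S n))
  end.

Fixpoint box (j : mi) : list mi :=
  match j with
  | [] => [[]]
  | a :: r => flat_map (fun b => map (cons b) (box r)) (seq 0 (S a))
  end.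

Definition downset (I : list mi) : list mi :=
  nodup (list_eq_dec Nat.eq_dec) (flat_map box I).

Definition wcoef (I : list mi) (c : mi -> R) (i : mi) : R :=
  sumR I (fun j => if mi_leb i j then c j else 0).

Definition Qp (I : list mi) (c : mi -> R) : R :=
  sumR (downset I) (fun i => (/4) ^ norm1 i * wcoef I c i).

Definition gcp_admissible (I : list mi) (c : mi -> R) : Prop :=
  forall i, In i (downset I) -> wcoef I c i = 0 \/ wcoef I c i = 1.

Definition is_gcp_solution (I : list mi) (c : mi -> R) : Prop :=
  gcp_admissible I c /\
  forall c' : mi -> R, gcp_admissible I c' -> Qp I c' <= Qp I c.

Fixpoint grid (i : mi) : list mi :=
  match i with
  | [] => [[]]
  | a :: r => flat_map (fun m => map (cons m) (grid r)) (seq 0 (S (2 ^ a)))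
  end.

Definition grid_pt (i m : mi) : nat -> R :=
  fun k => INR (nth k m 0%nat) / 2 ^ (nth k i 0%nat).

Definition hat (l m : nat) (t : R) : R := Rmax 0 (1 - Rabs (2 ^ l * t - INR m)).

Fixpoint hatprod (k : nat) (i m : mi) (x : nat -> R) : R :=
  match i, m with
  | a :: r, b :: s => hat a b (x k) * hatprod (S k) r s x
  | _, _ => 1
  end.

Definition interp (u : Fun) (i : mi) : Fun :=
  fun x => sumR (grid i) (fun m => u (grid_pt i m) * hatprod 0 i m x).

Fixpoint sub_idx (j : mi) (s : list bool) : option mi :=
  match j, s with
  | [], [] => Some []
  | a :: r, b :: t =>
      if b then match a with
                | O => None
                | S a' => option_map (cons a') (sub_idx r t)
                end
      else option_map (cons a) (sub_idx r t)
  | _, _ => None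
  end.

Fixpoint bvecs (n : nat) : list (list bool) :=
  match n with
  | O => [[]]
  | S n' => flat_map (fun b => map (cons b) (bvecs n')) [false; true]
  end.

(** hierarchical surplus h_j = sum_S (-1)^{|S|} u_{j - e_S}, u_m := 0 if m has a
    negative component *)
Definition hsur (U : mi -> Fun) (j : mi) : Fun :=
  fun x => sumR (bvecs (length j))
    (fun s => match sub_idx j s with
              | Some m => (-1) ^ (count_occ Bool.bool_dec s true) * U m x
              | None => 0
              end).

(** real power x^a for x >= 0, a > 0 (with 0^a = 0) *)
Definition rpow (x a : R) : R := if Rlt_dec 0 x then Rpower x a else 0.

Definition is_RInt (f : R -> R) (a b v : R) : Prop :=
  exists pr : Riemann_integrable f a b, RiemannInt pr = v.

Definition is_Gamma (z g : R) : Prop :=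
  forall eps, 0 < eps -> exists M, forall T, M <= T ->
    exists v, is_RInt (fun x => rpow x (z - 1) * exp (- x)) 0 T v /\ Rabs (v - g) < eps.

Definition weibull_G (lam kap t g : R) : Prop :=
  exists Gam w, is_Gamma (1 + / kap) Gam /\
    is_RInt (fun x => exp (- rpow (x / lam) kap)) 0 t w /\ g = w / (lam * Gam).

Definition eps_n (d n : nat) (s : R) : R :=
  / 3 * (/ 3) ^ d * (/ 4) ^ n * s *
  sum_f_R0 (fun k => C (n + d) k * (/ 3) ^ (d - 1 - k)) (d - 1).

(** I' = {i in I_n : U_i = 0} for an outcome a of (U_i) *)
Definition Iprime (d n : nat) (a : mi -> bool) : list mi :=
  filter (fun i => negb (a i)) (enum_mi d n).

Definition comb (u : Fun) (I : list mi) (c : mi -> R) : Fun :=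
  fun x => sumR I (fun i => c i * interp u i x).

(** probability that U_i = 1 under a finite joint law *)
Definition prob1 (om : list (R * (mi -> bool))) (i : mi) : R :=
  sumR om (fun pa => if snd pa i then fst pa else 0).

(* Main.v *)
Require Import Defs.
From Stdlib Require Import Reals List Arith Lia Lra Permutation FunctionalExtensionality Bool.
From Coquelicot Require Coquelicot.
Import ListNotations.
Open Scope R_scope.

Lemma sumR_nil {A} (f : A -> R) : sumR [] f = 0.
Proof. reflexivity. Qed.
Lemma sumR_cons {A} (a : A) l f : sumR (a :: l) f = f a + sumR l f.
Proof. reflexivity. Qed.
Lemma sumR_app {A} (l1 l2 : list A) f : sumR (l1 ++ l2) f = sumR l1 f + sumR l2 f.
Proof. induction l1; simpl; [ring| rewrite IHl1; ring]. Qed.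
Lemma sumR_map {A B} (g : A -> B) l f : sumR (map g l) f = sumR l (fun x => f (g x)).
Proof. induction l; simpl; [ring| rewrite IHl; ring]. Qed.
Lemma sumR_flat_map {A B} (g : A -> list B) l f :
  sumR (flat_map g l) f = sumR l (fun x => sumR (g x) f).
Proof. induction l; simpl; [ring| rewrite sumR_app, IHl; ring]. Qed.
Lemma sumR_ext_in {A} (l : list A) f g :
  (forall x, In x l -> f x = g x) -> sumR l f = sumR l g.
Proof. induction l; simpl; intros H; [ring|]. rewrite H, IHl; auto. Qed.
Lemma sumR_ext {A} (l : list A) f g : (forall x, f x = g x) -> sumR l f = sumR l g.
Proof. intros; apply sumR_ext_in; auto. Qed.
Lemma sumR_plus {A} (l : list A) f g :
  sumR l (fun x => f x + g x) = sumR l f + sumR l g.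
Proof. induction l; simpl; [ring| rewrite IHl; ring]. Qed.
Lemma sumR_minus {A} (l : list A) f g :
  sumR l (fun x => f x - g x) = sumR l f - sumR l g.
Proof. induction l; simpl; [ring| rewrite IHl; ring]. Qed.
Lemma sumR_scal {A} (l : list A) c f :
  sumR l (fun x => c * f x) = c * sumR l f.
Proof. induction l; simpl; [ring| rewrite IHl; ring]. Qed.
Lemma sumR_zero {A} (l : list A) : sumR l (fun _ => 0) = 0.
Proof. induction l; simpl; [ring| rewrite IHl; ring]. Qed.
Lemma sumR_le {A} (l : list A) f g :
  (forall x, In x l -> f x <= g x) -> sumR l f <= sumR l g.
Proof. induction l; simpl; intros H; [lra|]. specialize (IHl (fun x Hx => H x (or_intror Hx))).
  specialize (H a (or_introl eq_refl)). lra. Qed.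
Lemma sumR_nonneg {A} (l : list A) f :
  (forall x, In x l -> 0 <= f x) -> 0 <= sumR l f.
Proof. intros H. rewrite <- (sumR_zero l). apply sumR_le; auto. Qed.
Lemma sumR_swap {A B} (l1 : list A) (l2 : list B) F :
  sumR l1 (fun a => sumR l2 (fun b => F a b)) = sumR l2 (fun b => sumR l1 (fun a => F a b)).
Proof. induction l1; simpl.
  - rewrite sumR_zero; ring.
  - rewrite IHl1, <- sumR_plus. reflexivity. Qed.
Lemma sumR_filter {A} (P : A -> bool) l f :
  sumR (filter P l) f = sumR l (fun x => if P x then f x else 0).
Proof. induction l; simpl; [ring|]. destruct (P a); simpl; rewrite IHl; ring. Qed.
Lemma sumR_perm {A} (l1 l2 : list A) f : Permutation l1 l2 -> sumR l1 f = sumR l2 f.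
Proof. induction 1; simpl; try rewrite IHPermutation; try ring. rewrite IHPermutation1; auto. Qed.
Lemma sumR_set {A} (l1 l2 : list A) (P : A -> bool) f :
  NoDup l1 -> NoDup l2 -> (forall x, In x l1 <-> In x l2 /\ P x = true) ->
  sumR l1 f = sumR l2 (fun x => if P x then f x else 0).
Proof. intros N1 N2 H. rewrite <- sumR_filter. apply sumR_perm.
  apply NoDup_Permutation; auto. apply NoDup_filter; auto.
  intros x; rewrite filter_In; apply H. Qed.
Lemma sumR_zero_of_le {A} (l : list A) f :
  (forall x, In x l -> 0 <= f x) -> sumR l f <= 0 -> forall x, In x l -> f x = 0.
Proof. induction l; simpl; intros H1 H2 x Hx; [contradiction|].
  assert (0 <= sumR l f) by (apply sumR_nonneg; auto).
  assert (0 <= f a) by auto.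
  destruct Hx as [<-|Hx]; [lra|]. apply IHl; auto. lra. Qed.

Lemma sumR_seq_S0 n f : sumR (seq 0 (S n)) f = f 0%nat + sumR (seq 0 n) (fun k => f (S k)).
Proof. simpl. rewrite <- seq_shift, sumR_map. reflexivity. Qed.
Lemma sumR_seq_last n f : sumR (seq 0 (S n)) f = sumR (seq 0 n) f + f n.
Proof. rewrite seq_S, sumR_app. simpl. ring. Qed.

Lemma telescope (g : nat -> R) a :
  sumR (seq 0 (S a)) (fun b => g b - match b with O => 0 | S b' => g b' end) = g a.
Proof. induction a.
  - simpl. ring.
  - rewrite sumR_seq_last, IHa. ring. Qed.

Lemma mi_leb_len i j : mi_leb i j = true -> length i = length j.
Proof. revert j; induction i; destruct j; simpl; try discriminate; auto.
  intros H; apply andb_prop in H as [_ H]. f_equal; auto. Qed.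
Lemma mi_leb_norm i j : mi_leb i j = true -> (norm1 i <= norm1 j)%nat.
Proof. revert j; induction i; destruct j; simpl; try discriminate; try lia.
  intros H; apply andb_prop in H as [H1 H]. apply Nat.leb_le in H1.
  specialize (IHi _ H). unfold norm1 in *; simpl. lia. Qed.
Lemma mi_leb_eq i j : mi_leb i j = true -> (norm1 j <= norm1 i)%nat -> i = j.
Proof. revert j; induction i; destruct j; simpl; try discriminate; auto.
  intros H; apply andb_prop in H as [H1 H]. apply Nat.leb_le in H1.
  pose proof (mi_leb_norm _ _ H). unfold norm1 in *; simpl in *. intros.
  assert (a = n) by lia. subst. f_equal. apply IHi; auto. lia. Qed.
Lemma mi_leb_refl i : mi_leb i i = true.
Proof. induction i; simpl; auto. rewrite Nat.leb_refl; auto. Qed.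

Lemma box_cons a r : box (a :: r) = flat_map (fun b => map (cons b) (box r)) (seq 0 (S a)).
Proof. reflexivity. Qed.
Lemma enum_S d m : enum_mi (S d) m =
  flat_map (fun a => map (cons a) (enum_mi d (m - a))) (seq 0 (S m)).
Proof. reflexivity. Qed.

Lemma In_box j i : In j (box i) <-> mi_leb j i = true.
Proof. revert j; induction i; intros j.
  - simpl. destruct j; simpl; split; intros H; auto; try discriminate.
    destruct H as [H|[]]; discriminate.
  - rewrite box_cons, in_flat_map. split.
    + intros [b [Hb Hj]]. apply in_map_iff in Hj as [j' [<- Hj']].
      apply in_seq in Hb. simpl. apply andb_true_intro; split.
      apply Nat.leb_le; lia. apply IHi; auto.
    + destruct j as [|b j']; intros H; simpl in H; try discriminate.
      apply andb_prop in H as [H1 H]. apply Nat.leb_le in H1.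
      exists b; split. apply in_seq; lia. apply in_map. apply IHi; auto. Qed.

Lemma NoDup_box i : NoDup (box i).
Proof. induction i. simpl. constructor; auto. constructor. rewrite box_cons.
  generalize 0%nat. generalize (S a). induction n; intros s; simpl. constructor.
  apply NoDup_app. apply FinFun.Injective_map_NoDup; auto. intros x y H; injection H; auto.
  apply IHn. intros x H1 H2. apply in_map_iff in H1 as [y [<- _]].
  apply in_flat_map in H2 as [b [Hb Hy]]. apply in_map_iff in Hy as [z [Hz _]].
  injection Hz. apply in_seq in Hb. lia. Qed.

Lemma norm1_cons a j : norm1 (a :: j) = (a + norm1 j)%nat.
Proof. reflexivity. Qed.

Lemma In_enum d m j : In j (enum_mi d m) <-> length j = d /\ (norm1 j <= m)%nat.
Proof. revert m j; induction d; intros m j.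
  - simpl. split. intros [<-|[]]; simpl; split; auto; unfold norm1; simpl; lia.
    intros [H _]. destruct j; simpl in H; try discriminate; auto.
  - rewrite enum_S, in_flat_map. split.
    + intros [b [Hb Hj]]. apply in_map_iff in Hj as [j' [<- Hj']].
      apply in_seq in Hb. apply IHd in Hj'. rewrite norm1_cons. simpl. lia.
    + destruct j as [|b j']; intros [Hl Hn]; simpl in Hl; try discriminate.
      rewrite norm1_cons in Hn.
      exists b; split. apply in_seq; lia. apply in_map. apply IHd. lia. Qed.

Lemma NoDup_enum d m : NoDup (enum_mi d m).
Proof. revert m; induction d; intros m. simpl. constructor; auto. constructor. rewrite enum_S.
  generalize 0%nat. generalize (S m). induction n; intros s; simpl. constructor.
  apply NoDup_app. apply FinFun.Injective_map_NoDup; auto. intros x y H; injection H; auto.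
  apply IHn. intros x H1 H2. apply in_map_iff in H1 as [y [<- _]].
  apply in_flat_map in H2 as [b [Hb Hy]]. apply in_map_iff in Hy as [z [Hz _]].
  injection Hz. apply in_seq in Hb. lia. Qed.

Definition hsR (V : mi -> R) (j : mi) : R :=
  sumR (bvecs (length j))
    (fun s => match sub_idx j s with
              | Some m => (-1) ^ (count_occ Bool.bool_dec s true) * V m
              | None => 0 end).

Lemma hsR_cons V b j :
  hsR V (b :: j) = hsR (fun m => V (b :: m)) j -
    match b with O => 0 | S b' => hsR (fun m => V (b' :: m)) j end.
Proof. unfold hsR. simpl length. simpl bvecs. rewrite app_nil_r, sumR_app, !sumR_map.
  simpl sub_idx. destruct b.
  - rewrite sumR_zero, Rminus_0_r, Rplus_0_r. apply sumR_ext; intros s.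
    destruct (sub_idx j s); simpl; ring.
  - unfold Rminus.
    replace (- sumR (bvecs (length j)) _ ) with
      (-1 * sumR (bvecs (length j)) (fun s => match sub_idx j s with
              | Some m => (-1) ^ (count_occ Bool.bool_dec s true) * V (b :: m)
              | None => 0 end)) by ring.
    rewrite <- sumR_scal. f_equal; apply sumR_ext; intros s;
    destruct (sub_idx j s); simpl; ring.
Qed.

Lemma box_sum i : forall V, sumR (box i) (hsR V) = V i.
Proof. induction i; intros V.
  - simpl. unfold hsR. simpl. ring.
  - rewrite box_cons, sumR_flat_map.
    rewrite (sumR_ext _ _ (fun b => V (b :: i) - match b with O => 0 | S b' => V (b' :: i) end)).
    apply (telescope (fun b => V (b :: i))).
    intros b. rewrite sumR_map. rewrite (sumR_ext _ _ (fun j => hsR (fun m => V (b :: m)) j -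
      match b with O => 0 | S b' => hsR (fun m => V (b' :: m)) j end)).
    2: intros; apply hsR_cons.
    destruct b.
    + rewrite sumR_minus, IHi, sumR_zero. ring.
    + rewrite sumR_minus, !IHi. ring.
Qed.

Lemma hsur_hsR U j x : hsur U j x = hsR (fun m => U m x) j.
Proof. reflexivity. Qed.

Lemma interp_decomp u i x : interp u i x = sumR (box i) (fun j => hsur (interp u) j x).
Proof. rewrite (sumR_ext _ _ (hsR (fun m => interp u m x))). 2: intros; apply hsur_hsR.
  rewrite box_sum. reflexivity. Qed.

Lemma box_sub_downset I i j : In i I -> In j (box i) -> In j (downset I).
Proof. intros Hi Hj. unfold downset. apply nodup_In. apply in_flat_map. eauto. Qed.

Lemma comb_decomp u I c x :
  comb u I c x = sumR (downset I) (fun j => wcoef I c j * hsur (interp u) j x).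
Proof. unfold comb.
  rewrite (sumR_ext_in I _ (fun i => sumR (downset I)
        (fun j => c i * (if mi_leb j i then hsur (interp u) j x else 0)))).
  - rewrite sumR_swap. apply sumR_ext; intros j. unfold wcoef.
    rewrite Rmult_comm, <- sumR_scal. apply sumR_ext; intros i.
    destruct (mi_leb j i); ring.
  - intros i Hi. rewrite sumR_scal, interp_decomp. f_equal.
    apply sumR_set. apply NoDup_box. apply NoDup_nodup.
    intros j; split.
    + intros Hj. split. eapply box_sub_downset; eauto. apply In_box; auto.
    + intros [_ H]. apply In_box; auto.
Qed.

Lemma exists_coef : forall (k : nat) (I : list mi) (g : mi -> R), length I = k -> NoDup I ->
  exists c, forall i, In i I -> wcoef I c i = g i.
Proof.
  intros k. induction k as [k IH] using lt_wf_ind. intros I g HL HN.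
  destruct I as [|i0 I0].
  - exists (fun _ => 0). intros i [].
  -
    assert (Hmax : exists m, In m (i0 :: I0) /\ forall j, In j (i0 :: I0) -> (norm1 j <= norm1 m)%nat).
    { clear. generalize i0. induction I0 as [|a l IHl]; intros b.
      - exists b. split. left; auto. intros j [<-|[]]; lia.
      - destruct (IHl a) as [m [Hm Hmj]].
        destruct (le_lt_dec (norm1 b) (norm1 m)).
        + exists m. split. right; auto. intros j [<-|Hj]; auto.
        + exists b. split. left; auto. intros j [<-|Hj]; auto.
          specialize (Hmj j Hj). lia. }
    destruct Hmax as [m [Hm Hmj]].
    destruct (in_split _ _ Hm) as [l1 [l2 Heq]].
    set (J := l1 ++ l2).
    assert (HP : Permutation (i0 :: I0) (m :: J)).
    { rewrite Heq. apply Permutation_sym, Permutation_middle. }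
    assert (HNJ : NoDup (m :: J)) by (eapply Permutation_NoDup; eauto).
    assert (HmJ : ~ In m J) by (apply NoDup_cons_iff in HNJ; tauto).
    assert (HNJ' : NoDup J) by (apply NoDup_cons_iff in HNJ; tauto).
    assert (HLJ : length J = pred k).
    { apply Permutation_length in HP. simpl in HP. rewrite <- HL. simpl. lia. }
    destruct (IH (pred k) ltac:(simpl in HL; lia) J
        (fun i => g i - (if mi_leb i m then g m else 0)) HLJ HNJ') as [c0 Hc0].
    exists (fun j => if list_eq_dec Nat.eq_dec j m then g m else c0 j).
    intros i Hi. unfold wcoef. rewrite (sumR_perm _ _ _ HP). rewrite sumR_cons.
    destruct (list_eq_dec Nat.eq_dec m m) as [_|]; [|congruence].
    assert (Hs : forall i', sumR J (fun j => if mi_leb i' j then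
        (if list_eq_dec Nat.eq_dec j m then g m else c0 j) else 0) =
        sumR J (fun j => if mi_leb i' j then c0 j else 0)).
    { intros i'. apply sumR_ext_in. intros j Hj.
      destruct (list_eq_dec Nat.eq_dec j m); [subst; contradiction|auto]. }
    rewrite Hs.
    apply (Permutation_in _ HP) in Hi. destruct Hi as [<-|Hi].
    + rewrite mi_leb_refl.
      rewrite (sumR_ext_in _ _ (fun _ => 0)). rewrite sumR_zero; ring.
      intros j Hj. destruct (mi_leb m j) eqn:E; auto.
      exfalso. apply HmJ. replace m with j; auto. symmetry. apply mi_leb_eq; auto.
      apply Hmj. apply (Permutation_in _ (Permutation_sym HP)). right; auto.
    + specialize (Hc0 i Hi). unfold wcoef in Hc0. rewrite Hc0.
      destruct (mi_leb i m); ring.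
Qed.

Definition downclosed (I : list mi) : Prop :=
  forall i j, In j I -> mi_leb i j = true -> In i I.

Lemma gcp_w1 I c : NoDup I -> downclosed I -> is_gcp_solution I c ->
  forall i, In i (downset I) -> wcoef I c i = 1.
Proof. intros HN HD [Hadm Hmax].
  destruct (exists_coef (length I) I (fun _ => 1) eq_refl HN) as [c' Hc'].
  assert (HDI : forall i, In i (downset I) -> In i I).
  { intros i Hi. unfold downset in Hi. apply nodup_In, in_flat_map in Hi as [j [Hj Hij]].
    apply In_box in Hij. eapply HD; eauto. }
  assert (Hadm' : gcp_admissible I c') by (intros i Hi; right; apply Hc'; auto).
  specialize (Hmax c' Hadm'). unfold Qp in Hmax.
  rewrite (sumR_ext_in _ _ (fun i => (/4) ^ norm1 i)) in Hmax.
  2:{ intros i Hi. rewrite Hc'; auto. ring. }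
  assert (Hpos : forall i, 0 < (/4) ^ norm1 i) by (intros; apply pow_lt; lra).
  assert (Z := sumR_zero_of_le (downset I) (fun i => (/4) ^ norm1 i - (/4) ^ norm1 i * wcoef I c i)).
  intros i Hi.
  assert (Hw : 0 <= (/4) ^ norm1 i - (/4) ^ norm1 i * wcoef I c i ->
    (/4) ^ norm1 i - (/4) ^ norm1 i * wcoef I c i = 0 -> wcoef I c i = 1).
  { intros _ H. specialize (Hpos i). apply Rmult_eq_reg_l with ((/4) ^ norm1 i); lra. }
  apply Hw.
  - destruct (Hadm i Hi) as [->| ->]; specialize (Hpos i); lra.
  - apply Z; auto.
    + intros x Hx. destruct (Hadm x Hx) as [->| ->]; specialize (Hpos x); lra.
    + rewrite sumR_minus. lra.
Qed.

Definition Nlev (d k : nat) : R :=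
  match d with O => if Nat.eqb k 0 then 1 else 0 | S e => C (k + e) e end.

Lemma C_nn n : C n n = 1.
Proof. unfold C. rewrite Nat.sub_diag. simpl. field. apply INR_fact_neq_0. Qed.
Lemma C_n0 n : C n 0 = 1.
Proof. unfold C. rewrite Nat.sub_0_r. simpl. field. apply INR_fact_neq_0. Qed.
Lemma C_nonneg n k : 0 <= C n k.
Proof. unfold C. apply Rmult_le_pos. apply pos_INR.
  apply Rlt_le, Rinv_0_lt_compat, Rmult_lt_0_compat; apply INR_fact_lt_0. Qed.

Lemma Nlev_0 d : Nlev d 0 = 1.
Proof. destruct d; simpl; auto. apply C_nn. Qed.
Lemma Nlev_pascal e k : Nlev (S e) (S k) = Nlev e (S k) + Nlev (S e) k.
Proof. destruct e; simpl.
  - rewrite !C_n0. ring.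
  - replace (S k + S e)%nat with (S (S k + e)) by lia.
    replace (k + S e)%nat with (S k + e)%nat by lia. rewrite pascal by lia. reflexivity. Qed.

Lemma sumR_seq_only0 m f : (forall k, k <> 0%nat -> f k = 0) -> sumR (seq 0 (S m)) f = f 0%nat.
Proof. intros H. rewrite sumR_seq_S0. rewrite (sumR_ext _ _ (fun _ => 0)). rewrite sumR_zero; ring.
  intros; apply H; lia. Qed.

Lemma level_sum : forall d m (g : nat -> R),
  sumR (enum_mi d m) (fun j => g (norm1 j)) = sumR (seq 0 (S m)) (fun k => Nlev d k * g k).
Proof.
  induction d as [|e IHe]; intros m g.
  - rewrite sumR_seq_only0. simpl. unfold norm1; simpl. ring.
    intros k Hk. destruct k; [lia|]. simpl. ring.
  - induction m as [|m IHm] in g |- *.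
    + rewrite enum_S. simpl seq. simpl flat_map. rewrite app_nil_r, sumR_map.
      change (sumR (enum_mi e 0) (fun j => g (norm1 j)) = sumR [0%nat] (fun k => Nlev (S e) k * g k)).
      rewrite (IHe 0%nat g). simpl. rewrite !Nlev_0, C_nn. ring.
    + rewrite enum_S, sumR_flat_map, sumR_seq_S0, sumR_map.
      rewrite Nat.sub_0_r.
      change (sumR (enum_mi e (S m)) (fun j => g (norm1 j)) +
        sumR (seq 0 (S m)) (fun k => sumR (map (cons (S k)) (enum_mi e (m - k))) (fun j => g (norm1 j)))
        = sumR (seq 0 (S (S m))) (fun k => Nlev (S e) k * g k)).
      rewrite (sumR_ext (seq 0 (S m)) _ (fun k => sumR (enum_mi e (m - k)) (fun j => (fun k => g (S k)) (k + norm1 j)%nat))).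
      2:{ intros k. rewrite sumR_map. reflexivity. }
      specialize (IHm (fun k => g (S k))). rewrite enum_S, sumR_flat_map in IHm.
      rewrite (sumR_ext (seq 0 (S m)) _ (fun k => sumR (enum_mi e (m - k)) (fun j => (fun k => g (S k)) (k + norm1 j)%nat))) in IHm.
      2:{ intros k. rewrite sumR_map. reflexivity. }
      rewrite IHm, IHe, !(sumR_seq_S0 (S m)), !Nlev_0.
      rewrite (sumR_ext _ (fun k => Nlev (S e) (S k) * g (S k))
         (fun k => Nlev e (S k) * g (S k) + Nlev (S e) k * g (S k))).
      2:{ intros k. rewrite Nlev_pascal. ring. }
      rewrite sumR_plus. ring.
Qed.

Definition Aa (M e : nat) : R := sum_f_R0 (fun k => C M k * (/3) ^ (e - k)) e.

Lemma Aa_S M e : Aa M (S e) = /3 * Aa M e + C M (S e).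
Proof. unfold Aa. rewrite tech5. rewrite Nat.sub_diag, pow_O, Rmult_1_r.
  rewrite scal_sum. f_equal. apply sum_eq. intros k Hk.
  replace (S e - k)%nat with (S (e - k)) by lia. simpl. ring. Qed.

Lemma Aa_rel e M : (e < M)%nat -> 4 * Aa M e - Aa (S M) e = 3 * C M e.
Proof. induction e; intros H.
  - unfold Aa. simpl. rewrite !C_n0. ring.
  - rewrite !Aa_S. rewrite <- pascal by lia.
    replace (4 * (/ 3 * Aa M e + C M (S e)) - (/ 3 * Aa (S M) e + (C M e + C M (S e))))
      with (/3 * (4 * Aa M e - Aa (S M) e) + 3 * C M (S e) - C M e) by ring.
    rewrite IHe by lia. field. Qed.

Definition Ee (e n : nat) : R := /3 * (/4) ^ n * Aa (n + S e) e.

Lemma Ee_diff e n : Ee e n - Ee e (S n) = (/4) ^ (S n) * Nlev (S e) (S n).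
Proof. unfold Ee. simpl Nlev.
  replace (S n + S e)%nat with (S (n + S e)) by lia.
  replace (Aa (S (n + S e)) e) with (4 * Aa (n + S e) e - 3 * C (n + S e) e).
  2:{ rewrite <- Aa_rel by lia. ring. }
  replace (S (n + e))%nat with (n + S e)%nat by lia. simpl pow. field. Qed.

Lemma Aa_nonneg M e : 0 <= Aa M e.
Proof. unfold Aa. apply cond_pos_sum. intros k. apply Rmult_le_pos. apply C_nonneg.
  apply pow_le; lra. Qed.

Lemma Ee_nonneg e n : 0 <= Ee e n.
Proof. unfold Ee. apply Rmult_le_pos. apply Rmult_le_pos. lra. apply pow_le; lra. apply Aa_nonneg. Qed.

Lemma Aa_ge_last M e : C M e <= Aa M e.
Proof. destruct e. unfold Aa. simpl. lra.
  rewrite Aa_S. pose proof (Aa_nonneg M e). lra. Qed.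

Lemma Ee_top e n : (/4) ^ n * Nlev (S e) n <= 3 * Ee e n.
Proof. unfold Ee. simpl Nlev.
  assert (C (n + e) e <= Aa (n + S e) e).
  { eapply Rle_trans; [|apply Aa_ge_last]. destruct e.
    - rewrite !C_n0. lra.
    - replace (n + S (S e))%nat with (S (n + S e)) by lia.
      rewrite <- pascal by lia. replace (n + S e)%nat with (n + S e)%nat by lia.
      pose proof (C_nonneg (n + S e) e). lra. }
  assert (0 <= (/4)^n) by (apply pow_le; lra).
  replace (3 * (/ 3 * (/ 4) ^ n * Aa (n + S e) e)) with ((/4)^n * Aa (n + S e) e) by field.
  apply Rmult_le_compat_l; auto. Qed.

Lemma tail_tel e n m : (n <= m)%nat ->
  sumR (seq 0 (S m)) (fun k => Nlev (S e) k * (if Nat.ltb n k then (/4) ^ k else 0)) = Ee e n - Ee e m.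
Proof. induction 1.
  - rewrite (sumR_ext_in _ _ (fun _ => 0)). rewrite sumR_zero; ring.
    intros k Hk. apply in_seq in Hk. replace (Nat.ltb n k) with false. ring.
    symmetry; apply Nat.ltb_ge; lia.
  - rewrite sumR_seq_last, IHle. replace (Nat.ltb n (S m)) with true.
    pose proof (Ee_diff e m). lra. symmetry; apply Nat.ltb_lt; lia. Qed.

Lemma ind_sum d n m : (n <= m)%nat ->
  sumR (seq 0 (S m)) (fun k => Nlev d k * (if Nat.eqb k n then 1 else 0)) = Nlev d n.
Proof. induction 1.
  - rewrite sumR_seq_last. rewrite Nat.eqb_refl.
    rewrite (sumR_ext_in _ _ (fun _ => 0)). rewrite sumR_zero; ring.
    intros k Hk. apply in_seq in Hk. replace (Nat.eqb k n) with false. ring.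
    symmetry; apply Nat.eqb_neq; lia.
  - rewrite sumR_seq_last, IHle. replace (Nat.eqb (S m) n) with false. ring.
    symmetry; apply Nat.eqb_neq; lia. Qed.

Lemma eps_n_Ee e n s : eps_n (S e) n s = (/3) ^ (S e) * s * Ee e n.
Proof. unfold eps_n, Ee, Aa. replace (S e - 1)%nat with e by lia.
  replace (sum_f_R0 (fun k => C (n + S e) k * (/ 3) ^ (S e - 1 - k)) e) with
    (sum_f_R0 (fun k => C (n + S e) k * (/ 3) ^ (e - k)) e).
  ring. apply sum_eq. intros k _. replace (S e - 1 - k)%nat with (e - k)%nat by lia. auto. Qed.

Lemma rpow_pos x a : 0 < x -> rpow x a = Rpower x a.
Proof. intros H. unfold rpow. destruct (Rlt_dec 0 x); [auto|lra]. Qed.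
Lemma rpow_nonpos x a : x <= 0 -> rpow x a = 0.
Proof. intros H. unfold rpow. destruct (Rlt_dec 0 x); [lra|auto]. Qed.
Lemma rpow_nonneg x a : 0 <= rpow x a.
Proof. unfold rpow. destruct (Rlt_dec 0 x). unfold Rpower. apply Rlt_le, exp_pos. lra. Qed.

Lemma Rpower_le_self x a : 0 < x <= 1 -> 1 <= a -> Rpower x a <= x.
Proof. intros Hx Ha. unfold Rpower. rewrite <- (exp_ln x) at 2 by lra.
  assert (ln x <= 0). { rewrite <- ln_1. destruct (Req_dec x 1). subst; lra.
    apply Rlt_le, ln_increasing; lra. }
  destruct (Req_dec (a * ln x) (ln x)) as [E|E]. rewrite E; lra.
  apply Rlt_le, exp_increasing. nra. Qed.

Lemma Rpower_ge_self x a : 1 <= x -> 1 <= a -> x <= Rpower x a.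
Proof. intros Hx Ha. unfold Rpower. rewrite <- (exp_ln x) at 1 by lra.
  assert (0 <= ln x). { rewrite <- ln_1. destruct (Req_dec x 1). subst; lra.
    apply Rlt_le, ln_increasing; lra. }
  destruct (Req_dec (a * ln x) (ln x)) as [E|E]. rewrite E; lra.
  apply Rlt_le, exp_increasing. nra. Qed.

Lemma Rpower_ge_base u k : 0 < u <= 1 -> 0 < k <= 1 -> u <= Rpower u k.
Proof. intros Hu Hk. unfold Rpower. rewrite <- (exp_ln u) at 1 by lra.
  assert (ln u <= 0). { rewrite <- ln_1. destruct (Req_dec u 1). subst; lra.
    apply Rlt_le, ln_increasing; lra. }
  destruct (Req_dec (k * ln u) (ln u)) as [E|E]. rewrite E; lra.
  apply Rlt_le, exp_increasing. nra. Qed.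

Lemma rpow_subadd x y k : 0 <= x -> 0 <= y -> 0 < k <= 1 ->
  rpow (x + y) k <= rpow x k + rpow y k.
Proof. intros Hx Hy Hk.
  destruct (Req_dec x 0) as [->|Hx']. rewrite Rplus_0_l, (rpow_nonpos 0) by lra. lra.
  destruct (Req_dec y 0) as [->|Hy']. rewrite Rplus_0_r, (rpow_nonpos 0) by lra. lra.
  rewrite !rpow_pos by lra. set (s := x + y).
  assert (Hs : 0 < s) by (unfold s; lra).
  replace (Rpower x k) with (Rpower (s * (x / s)) k) by (f_equal; field; lra).
  replace (Rpower y k) with (Rpower (s * (y / s)) k) by (f_equal; field; lra).
  rewrite <- !Rpower_mult_distr; try lra; try (apply Rdiv_lt_0_compat; lra).
  assert (E1 : x / s <= Rpower (x / s) k).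
  { apply Rpower_ge_base; auto. split. apply Rdiv_lt_0_compat; lra.
    unfold Rdiv. rewrite <- (Rinv_r s) by lra. apply Rmult_le_compat_r.
    apply Rlt_le, Rinv_0_lt_compat; auto. unfold s; lra. }
  assert (E2 : y / s <= Rpower (y / s) k).
  { apply Rpower_ge_base; auto. split. apply Rdiv_lt_0_compat; lra.
    unfold Rdiv. rewrite <- (Rinv_r s) by lra. apply Rmult_le_compat_r.
    apply Rlt_le, Rinv_0_lt_compat; auto. unfold s; lra. }
  assert (0 < Rpower s k) by (unfold Rpower; apply exp_pos).
  assert (x / s + y / s = 1) by (unfold s; field; lra).
  nra. Qed.

Lemma rpow_mono x y k : 0 <= x <= y -> 0 < k -> rpow x k <= rpow y k.
Proof. intros H Hk. destruct (Req_dec x 0) as [->|Hx].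
  rewrite (rpow_nonpos 0) by lra. apply rpow_nonneg.
  rewrite !rpow_pos by lra. apply Rle_Rpower_l; lra. Qed.

Lemma decay a eps : 0 < a -> 0 < eps -> exists Y0, 0 < Y0 /\
  forall Y, Y0 <= Y -> rpow Y a * exp (- Y) <= eps.
Proof. intros Ha He.
  exists (Rmax 1 (2 * (a * ln (2 * a) - a - ln eps))). split.
  apply Rlt_le_trans with 1; [lra| apply Rmax_l].
  intros Y HY. assert (HY1 : 1 <= Y) by (eapply Rle_trans; [apply Rmax_l|eauto]).
  assert (HY2 : 2 * (a * ln (2 * a) - a - ln eps) <= Y) by (eapply Rle_trans; [apply Rmax_r|eauto]).
  rewrite rpow_pos by lra. unfold Rpower. rewrite <- exp_plus.
  rewrite <- (exp_ln eps) by lra.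
  assert (Hl : ln (Y / (2 * a)) <= Y / (2 * a) - 1).
  { pose proof (exp_ineq1_le (ln (Y / (2 * a)))). rewrite exp_ln in H. lra.
    apply Rdiv_lt_0_compat; lra. }
  assert (Hsplit : ln Y = ln (2 * a) + ln (Y / (2 * a))).
  { rewrite <- ln_mult. f_equal. field. lra. lra. apply Rdiv_lt_0_compat; lra. }
  destruct (Req_dec (a * ln Y + - Y) (ln eps)) as [E|E]. rewrite E; lra.
  apply Rlt_le, exp_increasing.
  assert (a * ln Y <= a * ln (2*a) + a * (Y / (2*a) - 1)) by (rewrite Hsplit; nra).
  replace (a * (Y / (2 * a) - 1)) with (Y / 2 - a) in H by (field; lra).
  lra. Qed.

Module WB.
Import Coquelicot.Coquelicot.

Lemma loc_pos z : 0 < z -> locally z (fun t => 0 < t).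
Proof. intros H. exists (mkposreal z H). intros t Ht. unfold ball in Ht; simpl in Ht.
  unfold AbsRing_ball, abs, minus, plus, opp in Ht; simpl in Ht.
  apply Rabs_lt_between' in Ht. lra. Qed.
Lemma loc_neg z : z < 0 -> locally z (fun t => t < 0).
Proof. intros H. assert (0 < - z) by lra. exists (mkposreal (-z) H0). intros t Ht. unfold ball in Ht; simpl in Ht.
  unfold AbsRing_ball, abs, minus, plus, opp in Ht; simpl in Ht.
  apply Rabs_lt_between' in Ht. lra. Qed.

Lemma rpow_derive a z : 0 < z -> derivable_pt_lim (fun t => rpow t a) z (a * Rpower z (a - 1)).
Proof. intros Hz. apply is_derive_Reals.
  apply (is_derive_ext_loc (fun t => Rpower t a)).
  - eapply filter_imp; [|apply (loc_pos z Hz)]. intros t Ht. rewrite rpow_pos; auto.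
  - apply is_derive_Reals. apply derivable_pt_lim_power; auto. Qed.

Lemma rpow_cont a z : 0 < a -> continuity_pt (fun t => rpow t a) z.
Proof. intros Ha. destruct (Rlt_le_dec 0 z) as [Hz|Hz].
  - apply derivable_continuous_pt. exists (a * Rpower z (a - 1)). apply rpow_derive; auto.
  - destruct (Rlt_le_dec z 0) as [Hz'|Hz'].
    + apply continuity_pt_filterlim.
      change (continuous (fun t => rpow t a) z). apply (continuous_ext_loc _ (fun _ => 0)).
      eapply filter_imp; [|apply (loc_neg z Hz')]. intros t Ht. rewrite rpow_nonpos; lra.
      apply continuous_const.
    + assert (z = 0) by lra. subst z.
      intros eps Heps. exists (exp (ln eps / a)). split. apply exp_pos.
      intros x [_ Hx]. unfold dist; simpl; unfold R_dist.
      rewrite (rpow_nonpos 0) by lra. rewrite Rminus_0_r in *.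
      destruct (Rle_lt_dec x 0). rewrite rpow_nonpos by lra. rewrite Rabs_R0; auto.
      rewrite rpow_pos by lra. rewrite Rabs_pos_eq by (unfold Rpower; apply Rlt_le, exp_pos).
      unfold Rpower. rewrite <- (exp_ln eps) by lra. apply exp_increasing.
      simpl in Hx; unfold R_dist in Hx. rewrite Rminus_0_r, Rabs_pos_eq in Hx by lra.
      assert (ln x < ln eps / a). { rewrite <- (ln_exp (ln eps / a)). apply ln_increasing; lra. }
      apply Rmult_lt_reg_l with (/ a). apply Rinv_0_lt_compat; lra.
      replace (/ a * (a * ln x)) with (ln x) by (field; lra).
      replace (/ a * ln eps) with (ln eps / a) by (field; lra). lra.
Qed.

Lemma dl_plus f g x df dg : derivable_pt_lim f x df -> derivable_pt_lim g x dg ->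
  derivable_pt_lim (fun y => f y + g y) x (df + dg).
Proof. intros; apply (derivable_pt_lim_plus f g); auto. Qed.
Lemma dl_minus f g x df dg : derivable_pt_lim f x df -> derivable_pt_lim g x dg ->
  derivable_pt_lim (fun y => f y - g y) x (df - dg).
Proof. intros; apply (derivable_pt_lim_minus f g); auto. Qed.
Lemma dl_mult f g x df dg : derivable_pt_lim f x df -> derivable_pt_lim g x dg ->
  derivable_pt_lim (fun y => f y * g y) x (df * g x + f x * dg).
Proof. intros; apply (derivable_pt_lim_mult f g); auto. Qed.
Lemma dl_scal c f x df : derivable_pt_lim f x df ->
  derivable_pt_lim (fun y => c * f y) x (c * df).
Proof. intros; apply (derivable_pt_lim_scal f c); auto. Qed.
Lemma dl_comp f g x df dg : derivable_pt_lim g x dg -> derivable_pt_lim f (g x) df ->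
  derivable_pt_lim (fun y => f (g y)) x (df * dg).
Proof. intros; apply (derivable_pt_lim_comp g f); auto. Qed.
Lemma dl_ext f g x l : (forall y, f y = g y) -> derivable_pt_lim f x l -> derivable_pt_lim g x l.
Proof. intros H. replace g with f; auto. apply functional_extensionality; auto. Qed.
Lemma dl_expneg x : derivable_pt_lim (fun y => exp (- y)) x (- exp (- x)).
Proof. replace (- exp (- x)) with (exp (- x) * (-1)) by ring.
  apply (dl_comp exp (fun y => - y)). 
  replace (-1) with (- 1) by ring. apply (derivable_pt_lim_opp id x 1). apply derivable_pt_lim_id.
  apply derivable_pt_lim_exp. Qed.
Lemma dl_const c x : derivable_pt_lim (fun _ => c) x 0.
Proof. apply derivable_pt_lim_const. Qed.

Section W.
Variables lam kap : R.
Hypothesis hlam : 0 < lam.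
Hypothesis hkap0 : 0 < kap.
Hypothesis hkap1 : kap <= 1.

Definition Sf (x : R) := exp (- rpow (x / lam) kap).
Definition Af (X : R) := RInt Sf 0 X.
Definition aa := / kap.
Definition gf (y : R) := rpow y aa * exp (- y).
Definition Gf (Y : R) := RInt gf 0 Y.

Lemma aa_ge1 : 1 <= aa.
Proof. unfold aa. rewrite <- Rinv_1. apply Rinv_le_contravar; lra. Qed.
Lemma aa_pos : 0 < aa.
Proof. pose proof aa_ge1; lra. Qed.

Lemma Sf_cont x : continuity_pt Sf x.
Proof. unfold Sf. apply (continuity_pt_comp (fun x => - rpow (x / lam) kap) exp).
  apply (continuity_pt_opp (fun x => rpow (x / lam) kap)).
  apply (continuity_pt_comp (fun x => x / lam) (fun t => rpow t kap)).
  apply (continuity_pt_mult id (fct_cte (/ lam))). apply derivable_continuous_pt, derivable_pt_id.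
  apply continuity_pt_const. intros u v; auto.
  apply rpow_cont; auto. apply derivable_continuous_pt, derivable_pt_exp. Qed.

Lemma gf_cont x : continuity_pt gf x.
Proof. unfold gf. apply (continuity_pt_mult (fun y => rpow y aa) (fun y => exp (- y))).
  apply rpow_cont, aa_pos.
  apply (continuity_pt_comp (fun y => - y) exp).
  apply (continuity_pt_opp id). apply derivable_continuous_pt, derivable_pt_id.
  apply derivable_continuous_pt, derivable_pt_exp. Qed.

Lemma Sf_ex a b : ex_RInt Sf a b.
Proof. apply (@ex_RInt_continuous R_CompleteNormedModule). intros z _. apply continuity_pt_filterlim, Sf_cont. Qed.
Lemma gf_ex a b : ex_RInt gf a b.
Proof. apply (@ex_RInt_continuous R_CompleteNormedModule). intros z _. apply continuity_pt_filterlim, gf_cont. Qed.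

Lemma Af_derive X : derivable_pt_lim Af X (Sf X).
Proof. apply is_derive_Reals. apply (is_derive_RInt Sf Af 0 X).
  apply filter_forall. intros b. unfold Af. apply (@RInt_correct R_CompleteNormedModule), Sf_ex.
  apply continuity_pt_filterlim, Sf_cont. Qed.
Lemma Gf_derive Y : derivable_pt_lim Gf Y (gf Y).
Proof. apply is_derive_Reals. apply (is_derive_RInt gf Gf 0 Y).
  apply filter_forall. intros b. unfold Gf. apply (@RInt_correct R_CompleteNormedModule), gf_ex.
  apply continuity_pt_filterlim, gf_cont. Qed.

Lemma Sf_bounds x : 0 < Sf x <= 1.
Proof. unfold Sf. split. apply exp_pos. rewrite <- exp_0.
  pose proof (rpow_nonneg (x / lam) kap).
  destruct (Req_dec (rpow (x / lam) kap) 0) as [E|E]. rewrite E, Ropp_0; lra.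
  apply Rlt_le, exp_increasing. lra. Qed.
Lemma Sf_0 : Sf 0 = 1.
Proof. unfold Sf. unfold Rdiv; rewrite Rmult_0_l, rpow_nonpos by lra. rewrite Ropp_0; apply exp_0. Qed.

Lemma RInt_1 X : RInt (fun _ => 1) 0 X = X.
Proof. rewrite RInt_const. unfold scal; simpl. unfold mult; simpl. ring. Qed.

Lemma Af_bounds X : 0 <= X -> 0 <= Af X <= X.
Proof. intros HX. unfold Af. split.
  apply RInt_ge_0; auto. apply Sf_ex. intros x _. pose proof (Sf_bounds x); lra.
  rewrite <- (RInt_1 X) at 2. apply RInt_le; auto. apply Sf_ex. apply ex_RInt_const.
  intros x _. apply Sf_bounds. Qed.

Lemma Af_mono b c : b <= c -> Af b <= Af c.
Proof. intros H. unfold Af. rewrite <- (RInt_Chasles Sf 0 b c) by apply Sf_ex.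
  assert (0 <= RInt Sf b c). apply RInt_ge_0; auto. apply Sf_ex. intros x _. pose proof (Sf_bounds x); lra.
  change (plus (RInt Sf 0 b) (RInt Sf b c)) with (RInt Sf 0 b + RInt Sf b c). lra. Qed.

Lemma gf_le1 y : 0 <= y <= 1 -> 0 <= gf y <= 1.
Proof. intros Hy. unfold gf. pose proof (rpow_nonneg y aa).
  assert (rpow y aa <= 1).
  { destruct (Req_dec y 0) as [->|Hy0]. rewrite rpow_nonpos; lra.
    rewrite rpow_pos by lra. pose proof (Rpower_le_self y aa ltac:(lra) aa_ge1). lra. }
  assert (0 < exp (- y) <= 1). { split. apply exp_pos. rewrite <- exp_0.
    destruct (Req_dec y 0) as [->|Hy0]. rewrite Ropp_0; lra. apply Rlt_le, exp_increasing; lra. }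
  split. apply Rmult_le_pos; lra. nra. Qed.

Lemma Gf_bounds Y : 0 <= Y <= 1 -> 0 <= Gf Y <= Y.
Proof. intros HY. unfold Gf. split.
  apply RInt_ge_0; try lra. apply gf_ex. intros x Hx. apply gf_le1; lra.
  rewrite <- (RInt_1 Y) at 2. apply RInt_le; try lra. apply gf_ex. apply ex_RInt_const.
  intros x Hx. apply gf_le1; lra. Qed.

Definition psi (Y : R) := lam * rpow Y aa.
Definition Kf (Y : R) := / lam * Af (psi Y) - gf Y - Gf Y.

Lemma Sf_psi Y : 0 < Y -> Sf (psi Y) = exp (- Y).
Proof. intros HY. unfold Sf, psi. f_equal. f_equal.
  replace (lam * rpow Y aa / lam) with (rpow Y aa) by (field; lra).
  rewrite (rpow_pos Y aa) by lra. rewrite rpow_pos by (unfold Rpower; apply exp_pos).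
  rewrite Rpower_mult. unfold aa. rewrite Rinv_l by lra. apply Rpower_1; auto. Qed.

Lemma Kf_derive Y : 0 < Y -> derivable_pt_lim Kf Y 0.
Proof. intros HY. unfold Kf.
  assert (Hpsi : derivable_pt_lim psi Y (lam * (aa * Rpower Y (aa - 1)))).
  { apply dl_scal. apply rpow_derive; auto. }
  assert (H1 : derivable_pt_lim (fun y => / lam * Af (psi y)) Y
             (/ lam * (Sf (psi Y) * (lam * (aa * Rpower Y (aa - 1)))))).
  { apply dl_scal. apply (dl_comp Af psi); auto. apply Af_derive. }
  assert (H2 : derivable_pt_lim gf Y (aa * Rpower Y (aa - 1) * exp (- Y) + rpow Y aa * (- exp (- Y)))).
  { unfold gf. apply (dl_mult (fun y => rpow y aa) (fun y => exp (- y))).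
    apply rpow_derive; auto. apply dl_expneg. }
  pose proof (dl_minus _ _ _ _ _ (dl_minus _ _ _ _ _ H1 H2) (Gf_derive Y)) as H.
  replace 0 with (/ lam * (Sf (psi Y) * (lam * (aa * Rpower Y (aa - 1)))) -
       (aa * Rpower Y (aa - 1) * exp (- Y) + rpow Y aa * - exp (- Y)) - gf Y).
  exact H.
  rewrite Sf_psi by auto. unfold gf. field. lra. Qed.

Lemma Kf_small d : 0 < d <= 1 -> Rabs (Kf d) <= 2 * d.
Proof. intros Hd. unfold Kf.
  assert (Hp : 0 <= psi d <= lam * d).
  { unfold psi. rewrite rpow_pos by lra. pose proof (Rpower_le_self d aa ltac:(lra) aa_ge1).
    assert (0 < Rpower d aa) by (unfold Rpower; apply exp_pos). nra. }
  pose proof (Af_bounds (psi d) ltac:(lra)).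
  assert (0 <= / lam * Af (psi d) <= d).
  { split. apply Rmult_le_pos. apply Rlt_le, Rinv_0_lt_compat; auto. lra.
    apply Rmult_le_reg_l with lam; auto. rewrite <- Rmult_assoc, Rinv_r by lra. lra. }
  pose proof (gf_le1 d ltac:(lra)).
  assert (gf d <= d).
  { unfold gf. rewrite rpow_pos by lra. pose proof (Rpower_le_self d aa ltac:(lra) aa_ge1).
    assert (0 < exp (- d) <= 1). { split. apply exp_pos. rewrite <- exp_0. apply Rlt_le, exp_increasing; lra. }
    assert (0 < Rpower d aa) by (unfold Rpower; apply exp_pos). nra. }
  pose proof (Gf_bounds d ltac:(lra)).
  apply Rabs_le. lra. Qed.

Lemma Kf_zero Y : 0 < Y -> Kf Y = 0.
Proof. intros HY.
  assert (Hc : forall d, 0 < d < Y -> Kf Y = Kf d).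
  { intros d Hd. destruct (MVT_cor2 Kf (fun _ => 0) d Y) as [c [Hc _]]. lra.
    intros c Hc. apply Kf_derive. lra. lra. }
  apply Rabs_eq_0. apply Rle_antisym; [|apply Rabs_pos].
  apply le_epsilon. intros eps He. rewrite Rplus_0_l.
  set (d := Rmin (Y / 2) (Rmin 1 (eps / 2))).
  assert (0 < d) by (unfold d; repeat apply Rmin_pos; lra).
  assert (d <= Y / 2) by apply Rmin_l.
  assert (d <= 1) by (unfold d; eapply Rle_trans; [apply Rmin_r|apply Rmin_l]).
  assert (d <= eps / 2) by (unfold d; eapply Rle_trans; [apply Rmin_r|apply Rmin_r]).
  rewrite (Hc d) by lra. pose proof (Kf_small d ltac:(lra)). lra. Qed.

Lemma key Y : 0 < Y -> Af (psi Y) = lam * (gf Y + Gf Y).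
Proof. intros HY. pose proof (Kf_zero Y HY). unfold Kf in H.
  apply Rmult_eq_reg_l with (/ lam). 2: apply Rinv_neq_0_compat; lra.
  rewrite <- Rmult_assoc, Rinv_l by lra. lra. Qed.

End W.

Section W2.
Variables lam kap : R.
Hypothesis hlam : 0 < lam.
Hypothesis hkap0 : 0 < kap.
Hypothesis hkap1 : kap <= 1.

Local Notation S := (Sf lam kap).
Local Notation A := (Af lam kap).

Lemma S_mult t c : 0 <= t -> 0 <= c -> S t * S c <= S (t + c).
Proof. intros Ht Hc. unfold Sf. rewrite <- exp_plus.
  assert (rpow ((t + c) / lam) kap <= rpow (t / lam) kap + rpow (c / lam) kap).
  { replace ((t + c) / lam) with (t / lam + c / lam) by (field; lra).
    apply rpow_subadd; try lra; apply Rmult_le_pos; try lra; apply Rlt_le, Rinv_0_lt_compat; lra. }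
  destruct (Req_dec (- rpow (t / lam) kap + - rpow (c / lam) kap) (- rpow ((t + c) / lam) kap)) as [E|E].
  rewrite E; lra. apply Rlt_le, exp_increasing. lra. Qed.

Lemma A0 : A 0 = 0.
Proof. unfold Af. apply (@RInt_point R_CompleteNormedModule). Qed.

Lemma nwu t X : 0 <= t -> 0 <= X -> A t + S t * A X <= A (t + X).
Proof. intros Ht HX. destruct (Req_dec X 0) as [->|HX0].
  rewrite A0, Rplus_0_r. lra.
  set (D := fun x => A (t + x) - A t - S t * A x).
  set (D' := fun x => S (t + x) * 1 - 0 - S t * S x).
  destruct (MVT_cor2 D D' 0 X) as [c [Hc Hc']]. lra.
  { intros c _. unfold D, D'. apply dl_minus. apply dl_minus.
    apply (dl_comp A (fun x => t + x)).
    replace 1 with (0 + 1) by ring. apply (derivable_pt_lim_plus (fun _ => t) id). 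
    apply derivable_pt_lim_const. apply derivable_pt_lim_id. apply Af_derive; auto.
    apply dl_const. apply dl_scal. apply Af_derive; auto. }
  assert (0 <= D' c) by (unfold D'; pose proof (S_mult t c Ht ltac:(lra)); lra).
  unfold D in Hc. rewrite Rplus_0_r, A0 in Hc. nra. Qed.

Lemma weibull_bound t g : 0 <= t -> weibull_G lam kap t g -> g <= 1 - exp (- rpow (t / lam) kap).
Proof. intros Ht [Gam [w [HG [Hw ->]]]].
  assert (Hwt : w = A t).
  { destruct Hw as [pr <-]. unfold Af. symmetry. apply (RInt_Reals S 0 t pr). }
  change (exp (- rpow (t / lam) kap)) with (S t).
  assert (HGam : forall eps, 0 < eps -> exists M, forall T, M <= T -> Rabs (Gf kap T - Gam) < eps).
  { intros eps He. destruct (HG eps He) as [M HM]. exists M. intros T HT.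
    destruct (HM T HT) as [v [[pr Hv] Hlt]].
    replace (Gf kap T) with v; auto. rewrite <- Hv. unfold Gf. rewrite <- RInt_Reals.
    apply RInt_ext. intros x _. unfold gf, aa. f_equal. f_equal. ring. }
  assert (Hmain : A t <= lam * Gam * (1 - S t)).
  { apply le_epsilon. intros eps He.
    set (e := eps / (3 * lam)). assert (He' : 0 < e) by (unfold e; apply Rdiv_lt_0_compat; lra).
    destruct (HGam e He') as [M HM].
    destruct (decay (aa kap) e (aa_pos kap hkap0 hkap1) He') as [Y0 [HY0 HY0']].
    set (Y1 := Rmax M 1).
    assert (HY1 : 1 <= Y1) by apply Rmax_r.
    set (X := psi lam kap Y1).
    assert (HX : A X = lam * (gf kap Y1 + Gf kap Y1)) by (apply key; auto; lra).
    set (Y2 := Rmax (Rmax M Y0) (Rmax 1 ((t + X) / lam))).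
    assert (HY2a : M <= Y2) by (unfold Y2; eapply Rle_trans; [apply Rmax_l|apply Rmax_l]).
    assert (HY2b : Y0 <= Y2) by (unfold Y2; eapply Rle_trans; [apply Rmax_r|apply Rmax_l]).
    assert (HY2c : 1 <= Y2) by (unfold Y2; eapply Rle_trans; [apply Rmax_l|apply Rmax_r]).
    assert (HY2d : (t + X) / lam <= Y2) by (unfold Y2; eapply Rle_trans; [apply Rmax_r|apply Rmax_r]).
    assert (HX2 : A (psi lam kap Y2) = lam * (gf kap Y2 + Gf kap Y2)) by (apply key; auto; lra).
    assert (Hpsi2 : t + X <= psi lam kap Y2).
    { unfold psi. rewrite rpow_pos by lra. pose proof (Rpower_ge_self Y2 (aa kap) HY2c (aa_ge1 kap hkap0 hkap1)).
      apply Rmult_le_compat_l with (r := lam) in HY2d; [|lra].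
      replace (lam * ((t + X) / lam)) with (t + X) in HY2d by (field; lra). nra. }
    assert (HX0 : 0 <= X).
    { unfold X, psi. apply Rmult_le_pos; [lra|apply rpow_nonneg]. }
    pose proof (nwu t X Ht HX0).
    assert (A (t + X) <= A (psi lam kap Y2)) by (apply Af_mono; auto).
    pose proof (HM Y2 HY2a) as HG2.
    specialize (HM Y1 ltac:(apply Rmax_l)). specialize (HY0' Y2 HY2b).
    assert (Hg1 : 0 <= gf kap Y1) by (unfold gf; apply Rmult_le_pos; [apply rpow_nonneg|apply Rlt_le, exp_pos]).
    assert (0 < S t <= 1) by (apply Sf_bounds; auto).
    apply Rabs_def2 in HM. apply Rabs_def2 in HG2.
    rewrite HX in H. assert (A t <= lam * (gf kap Y2 + Gf kap Y2) - S t * (lam * (gf kap Y1 + Gf kap Y1))) by lra.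
    assert (S t * (lam * (gf kap Y1 + Gf kap Y1)) >= S t * (lam * (Gam - e))).
    { apply Rle_ge, Rmult_le_compat_l; [lra|]. apply Rmult_le_compat_l; lra. }
    assert (lam * e * 3 = eps) by (unfold e; field; lra).
    assert (Hg2 : gf kap Y2 <= e) by exact HY0'.
    assert (lam * (gf kap Y2 + Gf kap Y2) <= lam * (Gam + 2 * e)) by (apply Rmult_le_compat_l; lra).
    assert (S t * (lam * (Gam - e)) = lam * Gam * S t - S t * (lam * e)) by ring.
    assert (S t * (lam * e) <= lam * e) by (assert (0 < lam * e) by nra; nra).
    lra. }
  rewrite Hwt.
  assert (0 < S t <= 1) by (apply Sf_bounds; auto).
  assert (0 <= A t) by (apply Af_bounds; auto).
  destruct (Rlt_le_dec 0 (lam * Gam)) as [Hp|Hp].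
  - apply Rmult_le_reg_r with (lam * Gam); auto. unfold Rdiv. rewrite Rmult_assoc, Rinv_l by lra. lra.
  - destruct (Req_dec (lam * Gam) 0) as [E|E].
    + rewrite E. unfold Rdiv. rewrite Rinv_0. lra.
    + assert (A t / (lam * Gam) <= 0).
      { unfold Rdiv. assert (/ (lam * Gam) < 0) by (apply Rinv_lt_0_compat; lra). nra. }
      lra.
Qed.
End W2.

End WB.

Section NRM.
Variable nrm : Fun -> R.
Hypothesis nrm_tri : forall f g : Fun, nrm (fun x => f x + g x) <= nrm f + nrm g.
Hypothesis nrm_hom : forall (c : R) (f : Fun), nrm (fun x => c * f x) = Rabs c * nrm f.

Lemma nrm_zero : nrm (fun _ => 0) = 0.
Proof. pose proof (nrm_hom 0 (fun _ => 0)) as H. rewrite Rabs_R0 in H.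
  assert (E : (fun _ : nat -> R => 0 * 0) = (fun _ => 0)) by (apply functional_extensionality; intros; ring).
  rewrite E in H. lra. Qed.

Lemma nrm_sum {A} (l : list A) (F : A -> Fun) :
  nrm (fun x => sumR l (fun j => F j x)) <= sumR l (fun j => nrm (F j)).
Proof. induction l; simpl.
  - rewrite nrm_zero; lra.
  - eapply Rle_trans. apply (nrm_tri (F a) (fun x => sumR l (fun j => F j x))). lra. Qed.

Lemma outcome_bound d n m (Hnm : (n <= m)%nat) (u : Fun) (s eps : R) (a : mi -> bool) (c : mi -> R)
  (Hlow : forall i, In i (enum_mi d n) -> (norm1 i < n)%nat -> a i = false)
  (hc : is_gcp_solution (Iprime d n a) c)
  (hM : nrm (fun x => u x - sumR (enum_mi d m) (fun j => hsur (interp u) j x)) < eps)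
  (h_bound : forall j : mi, length j = d ->
      nrm (hsur (interp u) j) <= (/ 3) ^ d * (/ 4) ^ norm1 j * s) (hs : 0 <= s) :
  nrm (fun x => u x - comb u (Iprime d n a) c x) <=
  eps + sumR (enum_mi d m) (fun j =>
     (if Nat.ltb n (norm1 j) then (/ 3) ^ d * (/ 4) ^ norm1 j * s else 0) +
     (if Nat.eqb (norm1 j) n && a j then (/ 3) ^ d * (/ 4) ^ norm1 j * s else 0)).
Proof.
  set (I' := Iprime d n a).
  set (H := fun j => hsur (interp u) j).
  assert (HN : NoDup I') by (apply NoDup_filter, NoDup_enum).
  assert (HinI : forall j, In j I' <-> In j (enum_mi d n) /\ a j = false).
  { intros j. unfold I', Iprime. rewrite filter_In. destruct (a j); simpl; intuition. }
  assert (HD : downclosed I').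
  { intros i j Hj Hij. apply HinI in Hj as [Hj Haj]. apply In_enum in Hj as [Hl Hn].
    pose proof (mi_leb_len _ _ Hij). pose proof (mi_leb_norm _ _ Hij).
    apply HinI. split. apply In_enum; split; lia.
    destruct (le_lt_dec (norm1 j) (norm1 i)) as [Hle|Hlt].
    - rewrite (mi_leb_eq _ _ Hij Hle); auto.
    - apply Hlow. apply In_enum; split; lia. lia. }
  pose proof (gcp_w1 I' c HN HD hc) as Hw.
  assert (Hcomb : forall x, comb u I' c x =
      sumR (enum_mi d m) (fun j => if Nat.leb (norm1 j) n && negb (a j) then H j x else 0)).
  { intros x. rewrite comb_decomp.
    rewrite (sumR_ext_in _ _ (fun j => H j x)). 2:{ intros j Hj. rewrite Hw; auto. unfold H; ring. }
    transitivity (sumR I' (fun j => H j x)).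
    - rewrite (sumR_set (downset I') I' (fun _ => true)). reflexivity.
      apply NoDup_nodup. auto.
      intros j. split.
      + intros Hj. split; auto. unfold downset in Hj. apply nodup_In, in_flat_map in Hj as [i [Hi Hji]].
        apply In_box in Hji. eapply HD; eauto.
      + intros [Hj _]. apply (box_sub_downset I' j j Hj). apply In_box, mi_leb_refl.
    - apply sumR_set. auto. apply NoDup_enum.
      intros j. rewrite HinI, !In_enum. destruct (a j); simpl.
      + rewrite andb_false_r. intuition discriminate.
      + rewrite andb_true_r, Nat.leb_le. intuition lia. }
  set (G := fun x => sumR (enum_mi d m) (fun j => if Nat.leb (norm1 j) n && negb (a j) then 0 else H j x)).
  assert (Heq : (fun x => u x - comb u I' c x) =
     (fun x => (u x - sumR (enum_mi d m) (fun j => hsur (interp u) j x)) + G x)).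
  { apply functional_extensionality; intros x. rewrite Hcomb. unfold G.
    replace (sumR (enum_mi d m) (fun j => hsur (interp u) j x)) with
      (sumR (enum_mi d m) (fun j => (if Nat.leb (norm1 j) n && negb (a j) then H j x else 0) +
          (if Nat.leb (norm1 j) n && negb (a j) then 0 else H j x))). rewrite sumR_plus. ring.
    apply sumR_ext; intros j. destruct (Nat.leb (norm1 j) n && negb (a j)); unfold H; ring. }
  fold I'. rewrite Heq.
  eapply Rle_trans. apply (nrm_tri (fun x => u x - sumR (enum_mi d m) (fun j => hsur (interp u) j x)) G).
  apply Rplus_le_compat. lra.
  unfold G. eapply Rle_trans. apply (nrm_sum (enum_mi d m) (fun j x => if Nat.leb (norm1 j) n && negb (a j) then 0 else H j x)).
  apply sumR_le. intros j Hj. apply In_enum in Hj as [Hl Hn].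
  assert (HB : 0 <= (/ 3) ^ d * (/ 4) ^ norm1 j * s).
  { apply Rmult_le_pos; auto. apply Rmult_le_pos; apply pow_le; lra. }
  destruct (Nat.leb (norm1 j) n) eqn:E1; destruct (a j) eqn:E2; simpl.
  - apply Nat.leb_le in E1.
    destruct (Nat.eq_dec (norm1 j) n) as [E3|E3].
    + rewrite (proj2 (Nat.ltb_ge _ _)) by lia. rewrite (proj2 (Nat.eqb_eq _ _)) by lia.
      rewrite Rplus_0_l. apply h_bound; auto.
    + exfalso. rewrite Hlow in E2. discriminate. apply In_enum; split; lia. lia.
  - rewrite nrm_zero. destruct (Nat.ltb _ _); destruct (Nat.eqb _ _); simpl; lra.
  - apply Nat.leb_gt in E1. rewrite (proj2 (Nat.ltb_lt _ _)) by lia.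
    pose proof (h_bound j Hl). unfold H. change (fun x => hsur (interp u) j x) with (hsur (interp u) j). destruct (Nat.eqb _ _); simpl; lra.
  - apply Nat.leb_gt in E1. rewrite (proj2 (Nat.ltb_lt _ _)) by lia.
    pose proof (h_bound j Hl). unfold H. change (fun x => hsur (interp u) j x) with (hsur (interp u) j). destruct (Nat.eqb _ _); simpl; lra.
Qed.
End NRM.

Theorem proposition3p2
  (d n : nat) (hd : (1 <= d)%nat) (hn : (1 <= n)%nat)
  (lam kap : R) (hlam : 0 < lam) (hkap0 : 0 < kap) (hkap1 : kap <= 1)
  (nrm : Fun -> R)
  (nrm_tri : forall f g : Fun, nrm (fun x => f x + g x) <= nrm f + nrm g)
  (nrm_hom : forall (c : R) (f : Fun), nrm (fun x => c * f x) = Rabs c * nrm f)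
  (u : Fun) (s : R) (hs : 0 <= s)
  (h_conv : forall eps, 0 < eps -> exists M, forall m, (M <= m)%nat ->
      nrm (fun x => u x - sumR (enum_mi d m) (fun j => hsur (interp u) j x)) < eps)
  (h_bound : forall j : mi, length j = d ->
      nrm (hsur (interp u) j) <= (/ 3) ^ d * (/ 4) ^ norm1 j * s)
  (tn : R) (htn : 0 <= tn) (t : mi -> R)
  (ht : forall i, In i (enum_mi d n) -> norm1 i = n -> 0 <= t i <= tn)
  (om : list (R * (mi -> bool)))
  (om_nonneg : forall pa, In pa om -> 0 <= fst pa)
  (om_sum : sumR om fst = 1)
  (hU_low : forall i, In i (enum_mi d n) -> (norm1 i < n)%nat ->
      forall pa, In pa om -> 0 < fst pa -> snd pa i = false)
  (hU_top : forall i, In i (enum_mi d n) -> norm1 i = n ->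
      weibull_G lam kap (t i) (prob1 om i))
  (c : (mi -> bool) -> mi -> R)
  (hc : forall pa, In pa om -> is_gcp_solution (Iprime d n (snd pa)) (c (snd pa))) :
  sumR om (fun pa =>
      fst pa * nrm (fun x => u x - comb u (Iprime d n (snd pa)) (c (snd pa)) x))
  <= eps_n d n s * (1 + 3 * (1 - exp (- rpow (tn / lam) kap))).
Proof.
  destruct d as [|e]; [lia|].
  set (F := 1 - exp (- rpow (tn / lam) kap)).
  assert (HF : 0 <= F).
  { unfold F. assert (exp (- rpow (tn / lam) kap) <= 1).
    { rewrite <- exp_0. pose proof (rpow_nonneg (tn / lam) kap).
      destruct (Req_dec (rpow (tn / lam) kap) 0) as [E|E]. rewrite E, Ropp_0; lra.
      apply Rlt_le, exp_increasing; lra. }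
    lra. }
  assert (Hprob : forall j, In j (enum_mi (S e) n) -> norm1 j = n -> prob1 om j <= F).
  { intros j Hj Hn. pose proof (ht j Hj Hn).
    eapply Rle_trans. apply (WB.weibull_bound lam kap hlam hkap0 hkap1 (t j)); [lra|]. apply hU_top; auto.
    unfold F. assert (rpow (t j / lam) kap <= rpow (tn / lam) kap).
    { apply rpow_mono; auto. split. apply Rmult_le_pos; [lra|apply Rlt_le, Rinv_0_lt_compat; lra].
      unfold Rdiv; apply Rmult_le_compat_r; [apply Rlt_le, Rinv_0_lt_compat|]; lra. }
    destruct (Req_dec (rpow (t j / lam) kap) (rpow (tn / lam) kap)) as [E|E]. rewrite E; lra.
    assert (exp (- rpow (tn / lam) kap) < exp (- rpow (t j / lam) kap)) by (apply exp_increasing; lra).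
    lra. }
  set (cc := (/ 3) ^ S e * s).
  assert (Hcc : 0 <= cc) by (unfold cc; apply Rmult_le_pos; auto; apply pow_le; lra).
  apply le_epsilon. intros eps Heps.
  destruct (h_conv eps Heps) as [M HM].
  set (m := Nat.max M n).
  assert (Hnm : (n <= m)%nat) by (unfold m; lia).
  specialize (HM m ltac:(unfold m; lia)).
  set (Bnd := fun j => (/ 3) ^ S e * (/ 4) ^ norm1 j * s).
  set (T1 := sumR (enum_mi (S e) m) (fun j => if Nat.ltb n (norm1 j) then Bnd j else 0)).
  set (B := fun a : mi -> bool => eps + sumR (enum_mi (S e) m) (fun j =>
     (if Nat.ltb n (norm1 j) then Bnd j else 0) + (if Nat.eqb (norm1 j) n && a j then Bnd j else 0))).
  assert (Hstep1 : sumR om (fun pa =>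
      fst pa * nrm (fun x => u x - comb u (Iprime (S e) n (snd pa)) (c (snd pa)) x))
      <= sumR om (fun pa => fst pa * B (snd pa))).
  { apply sumR_le. intros pa Hpa. pose proof (om_nonneg pa Hpa).
    destruct (Req_dec (fst pa) 0) as [E|E]. rewrite E; lra.
    apply Rmult_le_compat_l; auto.
    apply (outcome_bound nrm nrm_tri nrm_hom (S e) n m Hnm u s eps (snd pa) (c (snd pa))); auto.
    intros i Hi Hin. apply (hU_low i Hi Hin pa Hpa). lra. }
  set (T2 := sumR (enum_mi (S e) m) (fun j => if Nat.eqb (norm1 j) n then Bnd j * prob1 om j else 0)).
  assert (Hstep2 : sumR om (fun pa => fst pa * B (snd pa)) = eps + T1 + T2).
  { unfold B. rewrite (sumR_ext om _ (fun pa => eps * fst pa + T1 * fst pa +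
        sumR (enum_mi (S e) m) (fun j => if Nat.eqb (norm1 j) n then Bnd j * (if snd pa j then fst pa else 0) else 0))).
    - rewrite !sumR_plus, !sumR_scal, om_sum, sumR_swap. unfold T2.
      f_equal. ring. apply sumR_ext. intros j. destruct (Nat.eqb (norm1 j) n).
      rewrite sumR_scal. reflexivity. apply sumR_zero.
    - intros pa. rewrite sumR_plus. fold T1.
      assert (E : fst pa * sumR (enum_mi (S e) m) (fun j => if Nat.eqb (norm1 j) n && snd pa j then Bnd j else 0)
         = sumR (enum_mi (S e) m) (fun j => if Nat.eqb (norm1 j) n then Bnd j * (if snd pa j then fst pa else 0) else 0)).
      { rewrite <- sumR_scal. apply sumR_ext. intros j.
        destruct (Nat.eqb (norm1 j) n); destruct (snd pa j); simpl; ring. }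
      rewrite <- E. ring. }
  assert (HT1 : T1 = cc * (Ee e n - Ee e m)).
  { unfold T1, Bnd. etransitivity. apply (level_sum (S e) m (fun k => if Nat.ltb n k then (/ 3) ^ S e * (/ 4) ^ k * s else 0)).
    rewrite <- (tail_tel e n m Hnm), <- sumR_scal. apply sumR_ext. intros k.
    unfold cc. destruct (Nat.ltb n k); ring. }
  assert (HT2 : T2 <= cc * (/ 4) ^ n * F * Nlev (S e) n).
  { unfold T2. eapply Rle_trans.
    apply (sumR_le _ _ (fun j => if Nat.eqb (norm1 j) n then (/ 3) ^ S e * (/ 4) ^ n * s * F else 0)).
    - intros j Hj. destruct (Nat.eqb (norm1 j) n) eqn:E; [|lra].
      apply Nat.eqb_eq in E. unfold Bnd. rewrite E.
      apply Rmult_le_compat_l. apply Rmult_le_pos; auto. apply Rmult_le_pos; apply pow_le; lra.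
      apply Hprob; auto. apply In_enum in Hj as [Hl _]. apply In_enum; split; auto. lia.
    - etransitivity. apply Req_le. apply (level_sum (S e) m (fun k => if Nat.eqb k n then (/ 3) ^ S e * (/ 4) ^ n * s * F else 0)).
      rewrite <- (ind_sum (S e) n m Hnm). rewrite <- sumR_scal. apply Req_le. apply sumR_ext. intros k.
      unfold cc. destruct (Nat.eqb k n); ring. }
  pose proof (Ee_top e n). pose proof (Ee_nonneg e m). pose proof (Ee_nonneg e n).
  rewrite eps_n_Ee. fold cc. fold F.
  assert (cc * ((/ 4) ^ n * Nlev (S e) n) * F <= cc * (3 * Ee e n) * F).
  { apply Rmult_le_compat_r; auto. apply Rmult_le_compat_l; auto. }
  assert (cc * Ee e m >= 0) by (apply Rle_ge, Rmult_le_pos; auto).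
  assert (T2 <= cc * (3 * Ee e n) * F).
  { eapply Rle_trans; [apply HT2|]. replace (cc * (/ 4) ^ n * F * Nlev (S e) n) with
      (cc * ((/ 4) ^ n * Nlev (S e) n) * F) by ring. auto. }
  rewrite HT1 in Hstep2.
  replace (cc * Ee e n * (1 + 3 * F)) with (cc * Ee e n + cc * (3 * Ee e n) * F) by ring.
  lra.
Qed.
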